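(* Let $0<a\le 1$, let $k\ge 1$, and let $z_1,\dots,z_k\in\mathbb{C}$ be pairwise distinct with $|z_j|\le 1$ and $z_j\neq a$ for $j=1,\dots,k$. Let $r_1,\dots,r_k\ge 0$ be integers (independent of $n$), and for each integer $n\ge 2$ let $s_1(n),\dots,s_k(n)$ be integers with $0\le s_j(n)\le n-1$. Assume: (i) $r_j+s_j(n)\ge 1$ for all $j=1,\dots,k$ and all $n\ge 2$, and $r_j\ge 1$ for some $j\in\{1,\dots,k\}$; (ii) $s_j(n)/n\to 0$ as $n\to\infty$ for each $j\in\{1,\dots,k\}$; (iii) with $X=\{j\in\{1,\dots,k\}: r_j\ge 1\}$ and $P(z)=(z-a)\prod_{j\in X}(z-z_j)^{r_j}$, there exists $\zeta\in\mathbb{C}$ with $|\zeta|\le 1$, $P'(\zeta)=0$ and $|a-\zeta|<1$. For $n\ge 2$ let $n_j=r_jn+s_j(n)$ and $$p_n(z)=(z-a)^n\prod_{j=1}^{k}(z-z_j)^{n_j},\quad z\in\mathbb{C}.$$ Then there exists an integer $n_0$ such that for every $n\ge n_0$ there exists $\zeta\neq a$ with $p_n'(\zeta)=0$ and $|a-\zeta|<1$. *)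

(* Defs.v *)
From HB Require Import structures.
From mathcomp Require Import all_boot all_order all_algebra.
From mathcomp Require Import complex.
From mathcomp Require Import reals.
Set Implicit Arguments. Unset Strict Implicit. Unset Printing Implicit Defensive.
Import Order.TTheory GRing.Theory Num.Theory.
Local Open Scope ring_scope.

Definition Ppoly (R : realType) (k : nat) (a : R[i]) (z : 'I_k -> R[i])
  (r : 'I_k -> nat) : {poly R[i]} :=
  ('X - a%:P) * \prod_(j < k | (0 < r j)%N) ('X - (z j)%:P) ^+ r j.

Definition pn (R : realType) (k : nat) (a : R[i]) (z : 'I_k -> R[i])
  (r : 'I_k -> nat) (s : nat -> 'I_k -> nat) (n : nat) : {poly R[i]} :=
  ('X - a%:P) ^+ n * \prod_(j < k) ('X - (z j)%:P) ^+ (r j * n + s n j)%N.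

(* Main.v *)
Require Import Defs.
From HB Require Import structures.
From mathcomp Require Import all_boot all_order all_algebra.
From mathcomp Require Import complex.
From mathcomp Require Import reals.
From mathcomp Require Import ring lra zify.
Import Order.TTheory GRing.Theory Num.Theory.
Set Implicit Arguments. Unset Strict Implicit.
Local Open Scope ring_scope.

Section Gen.
Variables (C : numDomainType) (T : eqType) (cf : T -> C).

Definition Fp (l : seq T) (e : T -> nat) : {poly C} :=
  \prod_(x <- l) ('X - (cf x)%:P) ^+ e x.
Definition Lp (l : seq T) : {poly C} := \prod_(x <- l) ('X - (cf x)%:P).
Fixpoint Vp (e : T -> C) (l : seq T) : {poly C} :=
  match l with
  | [::] => 0
  | x :: t => (e x)%:P * Lp t + ('X - (cf x)%:P) * Vp e t
  end.

Lemma deriv_id l e : (Fp l e)^`() * Lp l = Fp l e * Vp (fun x => (e x)%:R) l.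
Proof.
elim: l => [|y t IH]; first by rewrite /Fp /Lp !big_nil derivC mul0r mulr0.
rewrite /Fp /Lp !big_cons /= -/(Fp t e) -/(Lp t).
rewrite derivM deriv_exp derivXsubC mul1r.
set g := ('X - (cf y)%:P).
case: (e y) => [|m].
  rewrite /= mulr0n mul0r add0r expr0 !mul1r polyC0 mul0r add0r.
  have -> : (Fp t e)^`() * (g * Lp t) = g * ((Fp t e)^`() * Lp t) by ring.
  by rewrite IH; ring.
rewrite /= polyC_natr.
have -> : (g ^+ m *+ m.+1 * Fp t e + g ^+ m.+1 * (Fp t e)^`()) * (g * Lp t)
   = g ^+ m.+1 * (Fp t e * m.+1%:R * Lp t) + g ^+ m.+1 * g * ((Fp t e)^`() * Lp t).
  by rewrite exprS; ring.
by rewrite IH; rewrite exprS; ring.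
Qed.

Lemma Vp_ext e1 e2 l : (forall x, e1 x = e2 x) -> Vp e1 l = Vp e2 l.
Proof. by move=> H; elim: l => //= y t ->; rewrite H. Qed.

Lemma Vp_lin e1 e2 c l :
  Vp (fun x => e1 x * c + e2 x) l = Vp e1 l * c%:P + Vp e2 l.
Proof.
elim: l => [|y t IH] /=; first by rewrite mul0r addr0.
by rewrite IH polyCD polyCM; ring.
Qed.

Lemma Lp_root l x : x \in l -> (Lp l).[cf x] = 0.
Proof.
move=> xl; rewrite /Lp horner_prod; apply/eqP; rewrite prodf_seq_eq0.
by apply/hasP; exists x => //; rewrite !hornerE subrr.
Qed.

Lemma Lp_nroot l w : (forall x, x \in l -> w != cf x) -> (Lp l).[w] != 0.
Proof.
move=> H; rewrite /Lp horner_prod prodf_seq_eq0; apply/hasPn => x xl.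
by rewrite !hornerE subr_eq0 H.
Qed.

Lemma Vp_eval e l x : uniq (map cf l) -> x \in l -> e x != 0 ->
  (Vp e l).[cf x] != 0.
Proof.
elim: l => [|y t IH] //= /andP [ny ut]; rewrite in_cons => /orP [/eqP -> | xt] ex.
  rewrite hornerD !hornerM !hornerE subrr mul0r addr0 mulf_neq0 //.
  apply: Lp_nroot => z zt; apply/negP => /eqP E; move/negP: ny; apply.
  by rewrite E; apply: map_f.
rewrite hornerD !hornerM !hornerE Lp_root // mulr0 add0r mulf_neq0 ?IH //.
rewrite subr_eq0; apply/negP => /eqP E; move/negP: ny; apply.
by rewrite -E; apply: map_f.
Qed.

Lemma Vp_size e l : (size (Vp e l) <= size l)%N.
Proof.
elim: l => [|y t IH] /=; first by rewrite size_poly0.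
apply: leq_trans (size_polyD _ _) _; rewrite geq_max; apply/andP; split.
  apply: leq_trans (size_polyMleq _ _) _.
  rewrite /Lp size_prod_XsubC; have := size_polyC_leq1 (e y); lia.
apply: leq_trans (size_polyMleq _ _) _; rewrite size_XsubC; lia.
Qed.

Lemma Vp_coef e l : (Vp e l)`_(size l).-1 = \sum_(x <- l) e x.
Proof.
elim: l => [|y t IH] /=; first by rewrite big_nil coef0.
rewrite big_cons coefD coefCM mulrBl coefB coefXM coefCM.
have -> : (Lp t)`_(size t) = 1.
  have := monic_prod_XsubC t predT cf; rewrite /Lp => /monicP.
  by rewrite lead_coefE size_prod_XsubC.

rewrite (nth_default _ (Vp_size e t)) mulr0 subr0 mulr1.
case: t IH => [|w t] /= IH; first by rewrite big_nil.
by rewrite IH.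
Qed.

Lemma Vp_bound e l w :
  `|(Vp e l).[w]| <= (\sum_(x <- l) `|e x|) * \prod_(x <- l) (`|w - cf x| + 1).
Proof.
elim: l => [|y t IH] /=; first by rewrite horner0 normr0 big_nil mul0r.
pose B := \prod_(x <- t) (`|w - cf x| + 1); pose S := \sum_(x <- t) `|e x|.
have -> : \sum_(x <- y :: t) `|e x| = `|e y| + S by rewrite big_cons.
have -> : \prod_(x <- y :: t) (`|w - cf x| + 1) = (`|w - cf y| + 1) * B
  by rewrite big_cons.
rewrite hornerD !hornerM !hornerE.
have B0 : 0 <= B by apply: prodr_ge0 => x _; rewrite addr_ge0.
have S0 : 0 <= S by apply: sumr_ge0 => x _.
have LB : `|(Lp t).[w]| <= B.
  rewrite /Lp horner_prod normr_prod; apply: ler_prod => x _.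
  rewrite normr_ge0 /= !hornerE.
  by rewrite lerDl.
apply: (le_trans (ler_normD _ _)); rewrite !normrM.
have d0 : 0 <= `|w - cf y| := normr_ge0 _.
have e0 : 0 <= `|e y| := normr_ge0 _.
have h1 : `|e y| * `|(Lp t).[w]| <= `|e y| * B by apply: ler_wpM2l.
have h2 : `|w - cf y| * `|(Vp e t).[w]| <= `|w - cf y| * (S * B) by apply: ler_wpM2l.
apply: le_trans (lerD h1 h2) _.
rewrite -[X in _ <= X]/((`|e y| + S) * (`|w - cf y| + 1) * B).
rewrite [X in _ <= X](_ : _ = `|e y| * B + `|w - cf y| * (S * B)
   + (`|e y| * `|w - cf y| * B + S * B)); last by ring.
by rewrite lerDl addr_ge0 // !mulr_ge0.
Qed.

End Gen.

Lemma prod_lb (C : numDomainType) (rs : seq C) x d : 0 <= d ->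
  (forall w, w \in rs -> d <= `|x - w|) -> d ^+ size rs <= \prod_(w <- rs) `|x - w|.
Proof.
move=> d0; elim: rs => [|y t IH] H; first by rewrite big_nil expr0.
rewrite big_cons /= exprS ler_pM ?exprn_ge0 //; first by apply: H; rewrite mem_head.
by apply: IH => w wt; apply: H; rewrite in_cons wt orbT.
Qed.

Lemma root_mult (C : idomainType) (c : C) (h : {poly C}) m : (2 <= m)%N ->
  root ((('X - c%:P) ^+ m * h)^`()) c.
Proof.
move=> m2; rewrite /root derivM deriv_exp derivXsubC mul1r !hornerE subrr.
case: m m2 => [|[|m]] //= _.
by rewrite hornerMn !hornerE subrr !expr0n /= mul0rn !mul0r add0r.
Qed.

Lemma size_ie k : size (index_enum 'I_k) = k.
Proof. by rewrite [index_enum _]unlock -enumT size_enum_ord. Qed.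
Theorem theorem3 (R : realType) (a : R) (k : nat)
  (z : 'I_k -> R[i]) (r : 'I_k -> nat) (s : nat -> 'I_k -> nat) :
  0 < a -> a <= 1 ->
  (1 <= k)%N ->
  injective z ->
  (forall j, `|z j| <= 1) ->
  (forall j, z j != (a%:C)%C) ->
  (forall n, (2 <= n)%N -> forall j, (s n j <= n - 1)%N) ->
  (* (i) *)
  (forall n, (2 <= n)%N -> forall j, (1 <= r j + s n j)%N) ->
  (exists j, (1 <= r j)%N) ->
  (* (ii) s_j(n)/n -> 0 *)
  (forall j (eps : R), 0 < eps ->
     exists N : nat, forall n : nat, (N <= n)%N ->
       `|(s n j)%:R / n%:R| < eps) ->
  (* (iii) *)
  (exists zeta : R[i], `|zeta| <= 1 /\
     root (Ppoly (a%:C)%C z r)^`() zeta /\ `|(a%:C)%C - zeta| < 1) ->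
  exists n0 : nat, forall n : nat, (n0 <= n)%N -> (2 <= n)%N ->
    exists zeta : R[i], zeta != (a%:C)%C /\
      root (pn (a%:C)%C z r s n)^`() zeta /\ `|(a%:C)%C - zeta| < 1.
Proof.
move=> a0 a1 k1 zinj z1 zna sle rs1 _ Hii [ze [ze1 [Hroot Hd]]].
set A := (a%:C)%C in zna Hroot Hd *.
pose cf := fun o : option 'I_k => if o is Some j then z j else A.
pose l := None :: map Some (index_enum 'I_k).
have ul : uniq (map cf l).
  rewrite /= -map_comp (map_inj_uniq (f := cf \o Some)) ?index_enum_uniq ?andbT.
    by apply/mapP => -[j _ /= E]; move: (zna j); rewrite E eqxx.
  by move=> x y /= /zinj.
have memS j : Some j \in l by rewrite in_cons map_f.
have memN : None \in l by rewrite mem_head.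
pose e1 := fun o : option 'I_k => if o is Some j then r j else 1%N.
have Pform : Ppoly A z r = Fp cf l e1.
  rewrite /Ppoly /Fp big_cons big_map expr1; congr (_ * _).
  rewrite big_mkcond; apply: eq_bigr => j _ /=.
  by case: ifP => // /negbT; rewrite -leqNgt leqn0 => /eqP ->; rewrite expr0.
pose en := fun n (o : option 'I_k) => if o is Some j then (r j * n + s n j)%N else n.
have pform n : pn A z r s n = Fp cf l (en n) by rewrite /pn /Fp big_cons big_map.
have [Pr|Pnr] := boolP (root (Ppoly A z r) ze).
  have Pa : ze != A.
    apply/eqP => E; move: Hroot; rewrite E /root /Ppoly derivM derivXsubC mul1r.
    rewrite hornerD hornerM !hornerE subrr mul0r addr0 horner_prod.
    move/prodf_eq0 => [j _]; rewrite !hornerE expf_eq0 subr_eq0 => /andP [_ /eqP E'].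
    by move: (zna j); rewrite E' eqxx.
  move: Pr; rewrite /root /Ppoly hornerM !hornerE horner_prod mulf_eq0 subr_eq0 (negbTE Pa) /=.
  move/prodf_eq0 => [j rj]; rewrite !hornerE expf_eq0 subr_eq0 => /andP [_ /eqP E].
  exists 0%N => n _ n2; exists (z j); split; first exact: zna.
  split; last by rewrite -E.
  rewrite /pn (bigD1 j) //= mulrCA; apply: (@root_mult _ (z j) _ (r j * n + s n j)%N).
  have : (1 <= r j)%N by []. nia.
have W1z : (Vp cf (fun o => ((e1 o)%:R : R[i])) l).[ze] = 0.
  have := congr1 (fun p => p.[ze]) (deriv_id cf l e1).
  rewrite /= -Pform hornerM (rootP Hroot) mul0r => /esym/eqP.
  rewrite hornerM mulf_eq0 => /orP [H|/eqP //].
  by move: Pnr; rewrite /root H.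
set d := 1 - `|A - ze|.
have d0 : 0 < d by rewrite subr_gt0.
have dreal : d \is Num.real by rewrite rpredB ?rpred1 ?normr_real.
pose B := \prod_(x <- l) (`|ze - cf x| + 1).
have B0 : 0 <= B by apply: prodr_ge0 => x _; rewrite addr_ge0.
pose c := B / d ^+ k.
have c0 : 0 <= c by rewrite divr_ge0 // exprn_ge0 // ltW.
have cMg : forall w : R[i], 0 <= w -> w = ((@complex.Re R w)%:C)%C by move=> [x y] /ger0_Im /= ->.
pose M := @complex.Re R c.
have cM : c = (M%:C)%C := cMg c c0.
have M0 : 0 <= M.
  by have := c0; rewrite lecE => /andP [_].
pose eps : R := 1 / ((M + 1) * k%:R).
have eps0 : 0 < eps.
  by rewrite /eps divr_gt0 ?ltr01 // mulr_gt0 ?ltr0n // ltr_wpDl.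
have [N HN] := fin_all_exists (fun j => Hii j eps eps0).
exists (\max_j N j + 2)%N => n Hn n2.
have n0 : (0 < n)%N by apply: ltnW.
pose Sn := (\sum_(j < k) s n j)%N.
have Sbound : (Sn%:R : R) * M < n%:R.
  have H j : ((s n j)%:R : R) <= eps * n%:R.
    have Hj : (N j <= n)%N.
      by have := leq_bigmax j (F := N); move: Hn; clear; lia.
    by move: (HN j n Hj) => /ltr_normlW; rewrite ltr_pdivrMr ?ltr0n // => /ltW.
  have Hs : (Sn%:R : R) <= eps * n%:R *+ k.
    rewrite /Sn natr_sum; apply: le_trans (ler_sum _ (fun j _ => H j)) _.
    by rewrite sumr_const card_ord.
  have E : eps * n%:R *+ k = n%:R / (M + 1).
    rewrite /eps -mulr_natr; field.
    by apply/andP; split; rewrite ?pnatr_eq0 -?lt0n // lt0r_neq0 // ltr_wpDl.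
  have M10 : 0 < M + 1 by rewrite ltr_wpDl.
  have q0 : 0 < (n%:R : R) / (M + 1) by rewrite divr_gt0 // ltr0n.
  have E2 : (n%:R : R) / (M + 1) * M = n%:R - n%:R / (M + 1).
    by field; rewrite lt0r_neq0.
  apply: le_lt_trans (_ : n%:R / (M + 1) * M < n%:R).
    by rewrite -E ler_wpM2r.
  rewrite E2; lra.
have SC : (Sn%:R : R[i]) * B < n%:R * d ^+ k.
  have := Sbound; rewrite -(ltcR (R:=R)) rmorphM /= !rmorph_nat -cM /c mulrA.
  by rewrite ltr_pdivrMr // exprn_gt0.
pose W := Vp cf (fun o => ((en n o)%:R : R[i])) l.
pose es := fun o : option 'I_k => if o is Some j then ((s n j)%:R : R[i]) else 0.
have Wlin : W = Vp cf (fun o => ((e1 o)%:R : R[i])) l * (n%:R)%:P + Vp cf es l.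
  rewrite /W -Vp_lin; apply: Vp_ext => -[j|] /=.
    by rewrite natrD natrM.
  by rewrite mul1r addr0.
have Wze : W.[ze] = (Vp cf es l).[ze] by rewrite Wlin hornerD hornerM W1z mul0r add0r.
have Wbound : `|W.[ze]| < n%:R * d ^+ k.
  rewrite Wze; apply: le_lt_trans (Vp_bound _ _ _ _) _.
  have -> : \sum_(x <- l) `|es x| = Sn%:R.
    rewrite big_cons big_map normr0 add0r /Sn natr_sum; apply: eq_bigr => j _.
    by rewrite normr_nat.
  exact: SC.
have WA : W.[A] != 0.
  have := Vp_eval (cf := cf) (e := fun o => ((en n o)%:R : R[i])) ul memN.
  by rewrite /= pnatr_eq0 -lt0n n0; apply.
have Wz j : W.[z j] != 0.
  have := Vp_eval (cf := cf) (e := fun o => ((en n o)%:R : R[i])) ul (memS j).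
  rewrite /= pnatr_eq0; apply.
  have := rs1 n n2 j; move: n0; clear; nia.
have Wn0 : W != 0 by apply/eqP => W0; move: WA; rewrite W0 horner0 eqxx.
have sl : size l = k.+1 by rewrite /= size_map size_ie.
pose lc := (n + \sum_(j < k) (r j * n + s n j))%N.
have cW : W`_k = lc%:R.
  have := Vp_coef cf (fun o => ((en n o)%:R : R[i])) l.
  rewrite sl /= => ->.
  by rewrite big_cons big_map /lc natrD natr_sum.
have sizeW : size W = k.+1.
  apply/eqP; rewrite eqn_leq -{1}sl Vp_size /= ltnNge; apply/negP => Hs.
  have := nth_default 0 Hs; rewrite cW => /eqP; rewrite pnatr_eq0 /lc.
  by move: n0; clear; lia.
have lcW : n%:R <= `|lead_coef W|.
  by rewrite lead_coefE sizeW /= cW normr_nat ler_nat /lc leq_addr.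
have [rs Hrs] := closed_field_poly_normal W.
have srs : size rs = k.
  have := congr1 (fun p : {poly R[i]} => size p) Hrs; rewrite /=; rewrite size_scale ?lead_coef_eq0 // size_prod_XsubC sizeW.
  by case.
have DI : (Fp cf l (en n))^`() * Lp cf l = Fp cf l (en n) * W := deriv_id cf l (en n).
case: (boolP (has (fun w => `|ze - w| < d) rs)) => [/hasP [w wrs wd] | /hasPn Hnh].
  have Wroot : W.[w] = 0.
    rewrite Hrs hornerZ horner_prod; apply/eqP; rewrite mulf_eq0 prodf_seq_eq0.
    by apply/orP; right; apply/hasP; exists w => //; rewrite !hornerE subrr.
  have wA : w != A by apply: contraNneq WA => <-; rewrite Wroot.
  have wz j : w != z j by apply: contraNneq (Wz j) => <-; rewrite Wroot.
  have Lw : (Lp cf l).[w] != 0 by apply: Lp_nroot => -[j|] _ /=.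
  exists w; split => //; split.
    move: (congr1 (fun p => p.[w]) DI); rewrite /= hornerM [in RHS]hornerM Wroot mulr0.
    by rewrite -pform => /eqP; rewrite mulf_eq0 (negbTE Lw) orbF.
  apply: le_lt_trans (ler_distD ze A w) _.
  have -> : 1 = `|A - ze| + d by rewrite /d addrCA subrr addr0.
  by rewrite ltrD2l.
have : n%:R * d ^+ k <= `|W.[ze]|.
  rewrite [in X in _ <= X]Hrs hornerZ normrM horner_prod normr_prod.
  rewrite (eq_bigr (fun w => `|ze - w|)); last by move=> w _; rewrite !hornerE.
  apply: ler_pM => //; first by rewrite exprn_ge0 // ltW.
  rewrite -srs; apply: prod_lb; first exact: ltW.
  move=> w wrs; have := Hnh w wrs.
  by rewrite real_leNgt ?normr_real.
by move/(lt_le_trans Wbound); rewrite ltxx.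
Qed.
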